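(* Consider quantitative group testing with $n$ items, each independently defective with probability $\gamma$ (the prevalence), where the test matrix $\boldsymbol{A}$ is the adjacency (parity-check) matrix of a regular $(d_\mathsf{v},d_\mathsf{c})$ bipartite graph (each item/variable node (VN) participates in $d_\mathsf{v}$ tests/constraint nodes (CNs), each test contains $d_\mathsf{c}$ items), and each test returns the exact number of defective items it contains. Decode with the following peeling decoder: initially all items are unresolved and each CN $\mathsf{c}_i$ holds its test result $s_i$; at each iteration, for every CN $\mathsf{c}_i$ of the residual graph with current residual degree $d^{(\ell)}_{\mathsf{c}_i}$ and residual syndrome $s_i^{(\ell)}$: if $s_i^{(\ell)}=0$, all its connected VNs are declared non-defective and their edges are removed; if $s_i^{(\ell)}=d^{(\ell)}_{\mathsf{c}_i}$, all its connected VNs are declared defective, $1$ is subtracted from the residual syndrome of each of their neighboring CNs, and their edges are removed; decoding stops when the residual graph is empty or no edge is removed in an iteration. Let $p_0^{(\ell)}$ (resp. $p_1^{(\ell)}$) be the probability that a message from a non-defective (resp. defective) VN to a CN at iteration $\ell$ is unresolved, and let $q_0^{(\ell)}$ (resp. $q_1^{(\ell)}$) be the probability that a message from a CN to a non-defective (resp. defective) VN at iteration $\ell$ is resolved. Then these quantities are given by the density evolution equations \begin{align*} q^{(\ell)}_0&=\sum_{i=0}^{d_\mathsf{c}-1}\binom{d_\mathsf{c}-1}{i}\gamma^i(1-\gamma)^{d_\mathsf{c}-1-i}\left(1-p^{(\ell-1)}_1\right)^i,\\ q^{(\ell)}_1&=\sum_{i=0}^{d_\mathsf{c}-1}\binom{d_\mathsf{c}-1}{i}\gamma^i(1-\gamma)^{d_\mathsf{c}-1-i}\left(1-p^{(\ell-1)}_0\right)^{d_\mathsf{c}-1-i},\\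 p^{(\ell)}_0&=\left(1-q^{(\ell-1)}_0\right)^{d_\mathsf{v}-1},\\ p^{(\ell)}_1&=\left(1-q^{(\ell-1)}_1\right)^{d_\mathsf{v}-1}. \end{align*}
   Context: Items are represented by $\boldsymbol{x}\in\{0,1\}^n$ with $x_j=1$ iff item $j$ is defective; the $m\times n$ test matrix $\boldsymbol{A}=(a_{i,j})$ has $a_{i,j}=1$ iff item $j$ is in test $i$, and the syndrome is $s_i=\sum_j x_j a_{i,j}$. The bipartite graph has an edge between VN $j$ and CN $i$ iff $a_{i,j}=1$. Density evolution refers to the standard asymptotic (large $n$, random regular graph) analysis of message-passing/peeling decoding, in which the messages along edges are tracked as probabilities; a message on an edge is ''resolved'' when the corresponding item has been identified by the decoder. *)

(* Defs.v *)
(* Density evolution for the peeling decoder of quantitative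
   group testing, modelled on the tree-like computation graph of a
   (dv,dc)-regular bipartite graph with i.i.d. Bernoulli(gamma) items. *)
From HB Require Import structures.
From mathcomp Require Import all_boot all_order all_algebra.
Set Implicit Arguments. Unset Strict Implicit. Unset Printing Implicit Defensive.
Import Order.TTheory GRing.Theory Num.Theory.
Local Open Scope ring_scope.

Section DE.
Variables (dv dc : nat).

(* (VC l).1 : configuration of the computation tree of a VN->CN message at
              iteration l: the state of the emitting VN together with the
              configurations of the dv-1 CN->VN messages at iteration l-1
              it receives from its other CNs.
   (VC l).2 : configuration of the computation tree of a CN->VN message at
              iteration l, excluding the receiving VN: the configurations of
              the dc-1 VN->CN messages at iteration l-1 from the other VNs. *)
Fixpoint VC (l : nat) : finType * finType :=
  match l with
  | 0 => (bool : finType, unit : finType)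
  | l'.+1 => (((bool * {ffun 'I_dv.-1 -> (VC l').2})%type : finType),
              ({ffun 'I_dc.-1 -> (VC l').1} : finType))
  end.

Definition xval (l : nat) : (VC l).1 -> bool :=
  match l return (VC l).1 -> bool with
  | 0 => fun b => b
  | _.+1 => fun t => t.1
  end.

(* msgs l = (vunres, cres):
   vunres t    : the VN->CN message at iteration l is unresolved;
   cres xv g   : the CN->VN message at iteration l is resolved, where xv is
                 the status of the receiving VN.
   Peeling rule at a CN: with U the set of other neighbours whose messages
   are still unresolved, residual syndrome s = xv + #(defective in U),
   residual degree d = 1 + #U; the CN resolves its VNs iff s = 0 or s = d. *)
Fixpoint msgs (l : nat) : ((VC l).1 -> bool) * (bool -> (VC l).2 -> bool) :=
  match l return ((VC l).1 -> bool) * (bool -> (VC l).2 -> bool) with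
  | 0 => (fun _ => true, fun _ _ => false)
  | l'.+1 =>
      let vu := (msgs l').1 in
      let cr := (msgs l').2 in
      (fun t : (VC l'.+1).1 => [forall i, ~~ cr t.1 (t.2 i)],
       fun (xv : bool) (g : (VC l'.+1).2) =>
         let U := [set i | vu (g i)] in
         let s := (nat_of_bool xv + #|[set i in U | xval (g i)]|)%N in
         let d := (1 + #|U|)%N in
         (s == 0)%N || (s == d))
  end.

Definition vunres l := (msgs l).1.
Definition cres l := (msgs l).2.

Variable R : realFieldType.
Variable gamma : R.

Definition bw (b : bool) : R := if b then gamma else 1 - gamma.

Fixpoint wts (l : nat) : ((VC l).1 -> R) * ((VC l).2 -> R) :=
  match l return ((VC l).1 -> R) * ((VC l).2 -> R) with
  | 0 => (bw, fun _ => 1)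
  | l'.+1 => (fun t : (VC l'.+1).1 => bw t.1 * \prod_i (wts l').2 (t.2 i),
              fun g : (VC l'.+1).2 => \prod_i (wts l').1 (g i))
  end.

Definition wV l := (wts l).1.
Definition wC l := (wts l).2.

Definition p_DE (b : bool) (l : nat) : R :=
  (\sum_(t : (VC l).1 | (xval t == b) && vunres t) wV t) /
  (\sum_(t : (VC l).1 | xval t == b) wV t).

Definition q_DE (b : bool) (l : nat) : R :=
  \sum_(g : (VC l).2 | cres b g) wC g.

End DE.

(* Main.v *)
Require Import Defs.
From HB Require Import structures.
From mathcomp Require Import all_boot all_order all_algebra.
From mathcomp Require Import ring.
Set Warnings "-notation-overridden,-ambiguous-paths".
Import Order.TTheory GRing.Theory Num.Theory.
Local Open Scope ring_scope.

Lemma prod_sum_cond (R : realFieldType) (I J : finType) (P : pred J) (w : J -> R) :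
  \sum_(f : {ffun I -> J} | [forall i : I, P (f i)]) \prod_i w (f i)
  = \prod_(i : I) \sum_(j | P j) w j.
Proof.
rewrite [RHS](eq_bigr (fun i => \sum_j (if P j then w j else 0))); last by move=> i _; rewrite big_mkcond.
rewrite bigA_distr_bigA /= big_mkcond /=.
apply: eq_bigr => f _.
case: (boolP [forall i : I, P (f i)]) => [/forallP H | ].
  by apply: eq_bigr => i _; rewrite H.
rewrite negb_forall => /existsP [i Hi].
by rewrite (bigD1 i) //= (negbTE Hi) mul0r.
Qed.

Lemma prod_sum (R : realFieldType) (I J : finType) (w : J -> R) :
  \sum_(f : {ffun I -> J}) \prod_i w (f i) = \prod_(i : I) \sum_j w j.
Proof. by rewrite bigA_distr_bigA. Qed.

Lemma split_pair (R : realFieldType) (gamma : R) (J : finType) (b : bool)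
  (Q : bool -> J -> bool) (G : J -> R) :
  \sum_(t : bool * J | (t.1 == b) && Q t.1 t.2) bw gamma t.1 * G t.2
  = bw gamma b * \sum_(j | Q b j) G j.
Proof.
rewrite -(pair_big_dep (fun i => i == b) Q (fun i j => bw gamma i * G j)).
by rewrite big_pred1_eq -big_distrr.
Qed.

Lemma mass (R : realFieldType) (gamma : R) (dv dc l : nat) :
  (\sum_(g : (VC dv dc l).2) wC gamma g = 1) /\
  (forall b, \sum_(t : (VC dv dc l).1 | xval t == b) wV gamma t = bw gamma b).
Proof.
elim: l => [|l [IH1 IH2]].
  split; last by move=> b; rewrite (big_pred1_eq _ b).
  by rewrite (eq_bigr (fun _ => 1)) // sumr_const card_unit.
have tot : \sum_(t : (VC dv dc l).1) wV gamma t = 1.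
  transitivity (bw gamma true + bw gamma false); last by rewrite /bw addrC subrK.
  rewrite (bigID (fun t => xval t)) -IH2 -IH2.
  by congr (_ + _); apply: eq_bigl => t; case: (xval t).
split.
  change (\sum_(g : {ffun 'I_dc.-1 -> (VC dv dc l).1}) \prod_i wV gamma (g i) = 1).
  by rewrite prod_sum tot big1.
move=> b.
change (\sum_(t : bool * {ffun 'I_dv.-1 -> (VC dv dc l).2} | t.1 == b)
   bw gamma t.1 * \prod_i wC gamma (t.2 i) = bw gamma b).
rewrite (eq_bigl (fun t : bool * {ffun 'I_dv.-1 -> (VC dv dc l).2} => (t.1 == b) && (fun _ _ => true) t.1 t.2)); last by move=> t; rewrite andbT.
rewrite (@split_pair _ gamma _ b (fun _ _ => true) (fun f : {ffun 'I_dv.-1 -> (VC dv dc l).2} => \prod_i wC gamma (f i))) prod_sum IH1 big1 ?mulr1 //.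
Qed.

Lemma cres_char (dv dc l : nat) (b : bool) (g : {ffun 'I_dc.-1 -> (VC dv dc l).1}) :
  cres (l:=l.+1) b g = [forall i, ~~ (vunres (g i) && (xval (g i) == ~~ b))].
Proof.
change (((b + #|[set i in [set i | vunres (g i)] | xval (g i)]|)%N == 0%N)
  || ((b + #|[set i in [set i | vunres (g i)] | xval (g i)]|)%N
      == (1 + #|[set i | vunres (g i)]|)%N) = [forall i, ~~ (vunres (g i) && (xval (g i) == ~~ b))]).
set U := [set i | vunres (g i)].
set D := [set i in U | xval (g i)].
have DU : D \subset U by apply/subsetP => i; rewrite inE => /andP[].
have le := subset_leq_card DU.
case: b => /=.
  rewrite eqn_add2l.
  have -> : (#|D| == #|U|) = (D == U) by rewrite eqEcard DU /= eqn_leq le.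
  apply/eqP/forallP => [H i | H].
    have : (i \in D) = (i \in U) by rewrite H.
    by rewrite !inE; case: (vunres (g i)); case: (xval (g i)).
  apply/setP => i; rewrite !inE; move: (H i).
  by case: (vunres (g i)); case: (xval (g i)).
rewrite add0n.
have -> : (#|D| == 1 + #|U|)%N = false.
  by apply/negbTE; rewrite add1n neq_ltn ltnS le.
rewrite orbF cards_eq0.
apply/eqP/forallP => [H i | H].
  have : i \notin D by rewrite H inE.
  by rewrite !inE; case: (vunres (g i)); case: (xval (g i)).
apply/setP => i; rewrite !inE; move: (H i).
by case: (vunres (g i)); case: (xval (g i)).
Qed.

Lemma totV (R : realFieldType) (gamma : R) (dv dc l : nat) :
  \sum_(t : (VC dv dc l).1) wV gamma t = 1.
Proof.
have IH2 := (@mass _ gamma dv dc l).2.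
transitivity (bw gamma true + bw gamma false); last by rewrite /bw addrC subrK.
rewrite (bigID (fun t => xval t)) -IH2 -IH2.
by congr (_ + _); apply: eq_bigl => t; case: (xval t).
Qed.

Lemma numS (R : realFieldType) (gamma : R) dv dc l (b : bool):
  \sum_(t : (VC dv dc l.+1).1 | (xval t == b) && vunres t) wV gamma t = \sum_(t : bool * {ffun 'I_dv.-1 -> (VC dv dc l).2} | (t.1 == b) && [forall i, ~~ cres t.1 (t.2 i)]) bw gamma t.1 * \prod_i wC gamma (t.2 i).
Proof. reflexivity. Qed.

Lemma qsumS (R : realFieldType) (gamma : R) dv dc l (b : bool):
  q_DE dv dc gamma b l.+1 = \sum_(g : {ffun 'I_dc.-1 -> (VC dv dc l).1} | cres (l:=l.+1) b g) \prod_i wV gamma (g i).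
Proof. reflexivity. Qed.

Lemma pS (R : realFieldType) (gamma : R) (dv dc l : nat) (b : bool)
  (hb : bw gamma b != 0) :
  p_DE dv dc gamma b l.+1 = (1 - q_DE dv dc gamma b l) ^+ dv.-1.
Proof.
rewrite /p_DE (@mass _ gamma dv dc l.+1).2.
rewrite numS.
rewrite (@split_pair _ gamma _ b (fun b' (f : {ffun 'I_dv.-1 -> (VC dv dc l).2}) => [forall i, ~~ cres b' (f i)]) (fun f => \prod_i wC gamma (f i))).
rewrite (@prod_sum_cond _ _ _ (fun x : (VC dv dc l).2 => ~~ cres b x) (@wC dv dc _ gamma l)) mulrC mulKf // prodr_const card_ord.
congr (_ ^+ _).
have tot := (@mass _ gamma dv dc l).1.
rewrite (bigID (cres b)) /= in tot.
by rewrite /q_DE -tot; ring.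
Qed.

Lemma qS (R : realFieldType) (gamma : R) (dv dc l : nat) (b : bool)
  (hb : bw gamma (~~ b) != 0) :
  q_DE dv dc gamma b l.+1 = (1 - bw gamma (~~ b) * p_DE dv dc gamma (~~ b) l) ^+ dc.-1.
Proof.
rewrite qsumS.
rewrite (eq_bigl (fun g : {ffun 'I_dc.-1 -> (VC dv dc l).1} =>
   [forall i, ~~ (vunres (g i) && (xval (g i) == ~~ b))])); last by move=> g; rewrite cres_char.
rewrite (@prod_sum_cond _ _ _ (fun x : (VC dv dc l).1 => ~~ (vunres x && (xval x == ~~ b))) (@wV dv dc _ gamma l)) prodr_const card_ord.
congr (_ ^+ _).
rewrite /p_DE (@mass _ gamma dv dc l).2 mulrC divfK //.
have tot := @totV _ gamma dv dc l.
rewrite (bigID (fun t => vunres t && (xval t == ~~ b))) /= in tot.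
have e : \sum_(t : (VC dv dc l).1 | (xval t == ~~ b) && vunres t) wV gamma t
   = \sum_(t : (VC dv dc l).1 | vunres t && (xval t == ~~ b)) wV gamma t.
  by apply: eq_bigl => t; rewrite andbC.
by rewrite e -tot; ring.
Qed.

Theorem proposition1 (R : realFieldType) (gamma : R) (dv dc : nat)
  (hgamma : 0 < gamma < 1) (hdv : (0 < dv)%N) (hdc : (0 < dc)%N) (l : nat) :
  let p0 := p_DE dv dc gamma false in
  let p1 := p_DE dv dc gamma true in
  let q0 := q_DE dv dc gamma false in
  let q1 := q_DE dv dc gamma true in
  [/\ q0 l.+1 = \sum_(i < dc.-1.+1)
                  'C(dc.-1, i)%:R * gamma ^+ i * (1 - gamma) ^+ (dc.-1 - i)
                  * (1 - p1 l) ^+ i,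
      q1 l.+1 = \sum_(i < dc.-1.+1)
                  'C(dc.-1, i)%:R * gamma ^+ i * (1 - gamma) ^+ (dc.-1 - i)
                  * (1 - p0 l) ^+ (dc.-1 - i),
      p0 l.+1 = (1 - q0 l) ^+ dv.-1
    & p1 l.+1 = (1 - q1 l) ^+ dv.-1].
Proof.
move=> p0 p1 q0 q1.
case/andP: hgamma => g0 g1.
have hT : bw gamma true != 0 by rewrite /bw lt0r_neq0.
have hF : bw gamma false != 0 by rewrite /bw lt0r_neq0 // subr_gt0.
split.
- rewrite /q0 /p1 (@qS _ gamma dv dc l false hT) /bw.
  have -> : 1 - gamma * p_DE dv dc gamma true l
      = (1 - gamma) + gamma * (1 - p_DE dv dc gamma true l) by ring.
  rewrite exprDn; apply: eq_bigr => i _.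
  rewrite exprMn -mulr_natl; ring.
- rewrite /q1 /p0 (@qS _ gamma dv dc l true hF) /bw.
  have -> : 1 - (1 - gamma) * p_DE dv dc gamma false l
      = (1 - gamma) * (1 - p_DE dv dc gamma false l) + gamma by ring.
  rewrite exprDn; apply: eq_bigr => i _.
  rewrite exprMn -mulr_natl; ring.
- exact: pS.
- exact: pS.
Qed.
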